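(* For every fixed positive integer $n$ there exists $\varepsilon>0$ such that for every positive integer $N$ there is no partitioning $f$ of the complete directed graph with loops $K_N$ on $N$ vertices (vertex set $V$ with $|V|=N$ and edge set $E=V\times V$) into $n$ partitions such that both (1) $\mathrm{rf}(f,v)\le k(n)-1$ for all $v\in V$, and (2) $\mathrm{ib}(f)\le 1+\varepsilon$.
   Context: Let $G=(V,E)$ be a directed graph and $P$ an $n$-element set (the partitions). A graph partitioning (partitioning into $n$ partitions) is a function $f:E\to P$. Its imbalance is $\mathrm{ib}(f)=\dfrac{\max_{l\in P}|\{e\in E: f(e)=l\}|}{|E|/n}$. For $v\in V$ let $E(v)$ be the set of edges incident to $v$; the replication factor of $v$ is $\mathrm{rf}(f,v)=|f(E(v))|$. A system on $n$ elements is a triple $(\mathcal{F},w,s)$ where $\mathcal{F}=(F_1,\dots,F_m)$ is a collection of subsets of $[n]$, $w\in[0,1]^m$ with $\sum_i w_i=1$, and $s\in[0,1]^{m\times m\times n}$ with $\sum_p s_{ijp}=1$ for all $i,j$. It is intersecting if for all $i,j,p$, $s_{ijp}>0$ implies $p\in F_i\cap F_j$. It is balanced if for all $p\in[n]$, $\sum_{i,j} w_iw_js_{ijp}=1/n$. Its cardinality is the size of the largest set in $\mathcal{F}$. $k(n)$ is the minimum $k$ such that there exists a balanced intersecting system on $n$ elements with cardinality $k$. *)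

(* Defs.v *)
From HB Require Import structures.
From mathcomp Require Import all_boot all_order all_algebra.
From mathcomp Require Import reals.
Set Implicit Arguments. Unset Strict Implicit. Unset Printing Implicit Defensive.
Import Order.TTheory GRing.Theory Num.Theory.
Local Open Scope ring_scope.

Definition is_system (R : realType) (n m : nat) (F : 'I_m -> {set 'I_n})
  (w : 'I_m -> R) (s : 'I_m -> 'I_m -> 'I_n -> R) : Prop :=
  (forall i, 0 <= w i <= 1) /\ \sum_(i < m) w i = 1 /\
  (forall i j p, 0 <= s i j p <= 1) /\
  (forall i j, \sum_(p < n) s i j p = 1).

Definition intersecting (R : realType) (n m : nat) (F : 'I_m -> {set 'I_n})
  (s : 'I_m -> 'I_m -> 'I_n -> R) : Prop :=
  forall i j p, 0 < s i j p -> p \in F i :&: F j.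

Definition balanced (R : realType) (n m : nat)
  (w : 'I_m -> R) (s : 'I_m -> 'I_m -> 'I_n -> R) : Prop :=
  forall p : 'I_n, \sum_(i < m) \sum_(j < m) w i * w j * s i j p = n%:R^-1.

Definition cardinality (n m : nat) (F : 'I_m -> {set 'I_n}) : nat :=
  (\max_(i < m) #|F i|)%N.

Definition has_bis (R : realType) (n k : nat) : Prop :=
  exists (m : nat) (F : 'I_m -> {set 'I_n}) (w : 'I_m -> R)
         (s : 'I_m -> 'I_m -> 'I_n -> R),
    is_system F w s /\ intersecting F s /\ balanced w s /\ cardinality F = k.

Definition is_k_of (R : realType) (n k : nat) : Prop :=
  has_bis R n k /\ forall k', has_bis R n k' -> (k <= k')%N.

Definition incident (N : nat) (v : 'I_N) : {set 'I_N * 'I_N} :=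
  [set e | (e.1 == v) || (e.2 == v)].

Definition rf (N n : nat) (f : 'I_N * 'I_N -> 'I_n) (v : 'I_N) : nat :=
  #|f @: incident v|.

Definition ib (R : realType) (N n : nat) (f : 'I_N * 'I_N -> 'I_n) : R :=
  (\max_(l < n) #|[set e | f e == l]|)%N%:R / ((N * N)%N%:R / n%:R).

(* Main.v *)
Require Import Defs.
From HB Require Import structures.
From mathcomp Require Import all_boot all_order all_algebra.
From mathcomp Require Import reals.
From mathcomp Require Import all_classical all_reals all_analysis.
Import Order.TTheory GRing.Theory Num.Theory.
Local Open Scope ring_scope.
Set Implicit Arguments. Unset Strict Implicit. Unset Printing Implicit Defensive.

Record AS (R : realType) (n kn : nat) (e : R) (w : {set 'I_n} -> R)
  (y : {set 'I_n} -> {set 'I_n} -> 'I_n -> R) : Prop := {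
  as_w0 : forall A, 0 <= w A;
  as_w1 : \sum_A w A = 1;
  as_y0 : forall A B p, 0 <= y A B p;
  as_ys : forall A B, \sum_p y A B p = w A * w B;
  as_yI : forall A B p, p \notin A :&: B -> y A B p = 0;
  as_wk : forall A : {set 'I_n}, (kn <= #|A|)%N -> w A = 0;
  as_ld : forall p, \sum_A \sum_B y A B p <= (1 + e) / n%:R }.

Lemma sum_enum (R : realType) (n : nat) (g : {set 'I_n} -> R) :
  \sum_(i < #|{: {set 'I_n}}|) g (enum_val i) = \sum_A g A.
Proof. by rewrite -(big_enum_val (A := predT)). Qed.


Lemma exact_bis (R : realType) (n kn : nat) (hn : (0 < n)%N) w y :
  @AS R n kn 0 w y -> exists c, (c < kn)%N /\ has_bis R n c.
Proof.
case=> w0 w1 y0 ys yI wk ld.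
have [A0 HA0] : exists A0, 0 < w A0.
  case: (pickP (fun A => 0 < w A)) => [A HA|H]; first by exists A.
  move: w1; rewrite big1 => [/eqP|A _]; first by rewrite eq_sym oner_eq0.
  by apply/eqP; rewrite eq_le w0 andbT leNgt H.
pose r A := if 0 < w A then A else A0.
have rpos A : 0 < w (r A) by rewrite /r; case: ifP.
have wle1 A : w A <= 1.
  by rewrite -w1 (bigD1 A) //= lerDl sumr_ge0.
have yle A B p : y A B p <= w A * w B.
  by rewrite -ys (bigD1 p) //= lerDl sumr_ge0.
have kpos A : (#|r A| < kn)%N.
  by rewrite ltnNge; apply/negP => /wk h; move: (rpos A); rewrite h ltxx.
pose m := #|{: {set 'I_n}}|.
pose F (i : 'I_m) := r (enum_val i).
pose w' (i : 'I_m) := w (enum_val i).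
pose s' (i j : 'I_m) (p : 'I_n) := y (F i) (F j) p / (w (F i) * w (F j)).
have wFF (i j : 'I_m) : 0 < w (F i) * w (F j) by apply: mulr_gt0; apply: rpos.
have load p : \sum_A \sum_B y A B p = n%:R^-1.
  have ld' p' : n%:R^-1 - \sum_A \sum_B y A B p' >= 0.
    by rewrite subr_ge0 (le_trans (ld p')) // addr0 mul1r.
  have tot : \sum_(p' < n) (n%:R^-1 - \sum_A \sum_B y A B p') = 0.
    rewrite sumrB sumr_const card_ord -[n%:R^-1 *+ n]mulr_natl mulfV ?pnatr_eq0 -?lt0n //.
    rewrite exchange_big /=.
    under eq_bigr do rewrite exchange_big /= .
    under eq_bigr do under eq_bigr do rewrite ys.
    under eq_bigr do rewrite -big_distrr /=.
    by rewrite -big_distrl /= w1 mulr1 subrr.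
  have := @psumr_eq0P _ _ _ _ (fun p' _ => ld' p') tot p isT.
  by move/eqP; rewrite subr_eq0 => /eqP <-.
exists (\max_(i < m) #|F i|)%N; split.
  have kn0 : (0 < kn)%N by apply: leq_ltn_trans (kpos A0).
  rewrite -(prednK kn0) ltnS; apply/bigmax_leqP => i _.
  by rewrite -ltnS prednK // kpos.
exists m, F, w', s'; split; [|split; [|split]] => //.
- split; [|split; [|split]].
  + by move=> i; rewrite w0 wle1.
  + by rewrite /w' sum_enum.
  + move=> i j p; rewrite /s' divr_ge0 ?y0 ?(ltW (wFF i j)) //=.
    by rewrite ler_pdivrMr // mul1r yle.
  + move=> i j; rewrite /s' -mulr_suml ys divff //.
    by rewrite gt_eqF.
- move=> i j p; rewrite /s'; apply: contraTT => hp.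
  by rewrite yI // mul0r ltxx.
- move=> p; rewrite /w' /s' -(load p) -sum_enum; apply: eq_bigr => i _.
  rewrite -sum_enum; apply: eq_bigr => j _.
  rewrite /F; set A := enum_val i; set B := enum_val j.
  have [hA|hA] := boolP (0 < w A); last first.
    have eA : w A = 0 by apply/eqP; rewrite eq_le w0 andbT leNgt.
    apply/eqP; rewrite eA !mul0r eq_sym eq_le y0 andbT.
    by have := yle A B p; rewrite eA mul0r.
  have [hB|hB] := boolP (0 < w B); last first.
    have eB : w B = 0 by apply/eqP; rewrite eq_le w0 andbT leNgt.
    apply/eqP; rewrite eB !mulr0 mul0r eq_sym eq_le y0 andbT.
    by have := yle A B p; rewrite eB mulr0.
  rewrite /r hA hB mulrC -mulrA mulVf ?mulr1 //.
  by rewrite mulf_neq0 // gt_eqF.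
Qed.

Lemma sum_pick (X : finType) (a : X) (G : X -> nat) :
  (\sum_x (a == x) * G x = G a)%N.
Proof.
rewrite (bigD1 a) //= eqxx mul1n big1 ?addn0 // => x.
by rewrite eq_sym => /negbTE ->.
Qed.

Lemma sum_pick1 (X : finType) (a : X) : (\sum_x (a == x : nat) = 1)%N.
Proof. by rewrite -[RHS](sum_pick a (fun _ => 1%N)); apply: eq_bigr => x _; rewrite muln1. Qed.

Lemma graph_AS (R : realType) n kn N (hN : (0 < N)%N) (hn : (0 < n)%N)
  (f : 'I_N * 'I_N -> 'I_n) (e : R) :
  (forall v, rf f v <= kn - 1)%N -> ib R f <= 1 + e ->
  exists w y, @AS R n kn e w y.
Proof.
move=> hrf hib.
pose S v := f @: incident v.
have inS x : f x \in S x.1 /\ f x \in S x.2.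
  by split; apply: imset_f; rewrite inE eqxx ?orbT.
pose cnt (A : {set 'I_n}) := (\sum_(v : 'I_N) (S v == A))%N.
pose ce (A B : {set 'I_n}) (p : 'I_n) :=
  (\sum_(x : 'I_N * 'I_N) ((S x.1 == A) * ((S x.2 == B) * (f x == p))))%N.
have N0 : (N%:R : R) != 0 by rewrite pnatr_eq0 -lt0n.
have NN0 : ((N * N)%N%:R : R) != 0 by rewrite pnatr_eq0 muln_eq0 negb_or -lt0n hN.
have n0 : (n%:R : R) != 0 by rewrite pnatr_eq0 -lt0n.
have cnt_sum : (\sum_A cnt A = N)%N.
  rewrite /cnt exchange_big /=.
  under eq_bigr do rewrite sum_pick1.
  by rewrite sum_nat_const card_ord muln1.
have ce_sum A B : (\sum_p ce A B p = cnt A * cnt B)%N.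
  rewrite /ce exchange_big /=.
  under eq_bigr do rewrite -big_distrr /= -big_distrr /= sum_pick1 muln1.
  rewrite /cnt big_distrl /=.
  under [RHS]eq_bigr do rewrite big_distrr /=.
  by rewrite pair_bigA.
have ce_I A B p : p \notin A :&: B -> ce A B p = 0%N.
  move=> hp; apply: big1 => x _.
  case: eqP => [hA|]; last by rewrite mul0n.
  case: eqP => [hB|]; last by rewrite mul0n muln0.
  case: eqP => [hf|]; last by rewrite !muln0.
  exfalso; move/negP: hp; apply; rewrite inE -hA -hB -hf.
  by have [-> ->] := inS x.
have cnt_k (A : {set 'I_n}) : (kn <= #|A|)%N -> cnt A = 0%N.
  move=> hA; apply: big1 => v _; apply/eqP; rewrite eqb0; apply/eqP => SA.
  have h1 : (0 < #|S v|)%N.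
    by apply/card_gt0P; exists (f (v, v)); have [h _] := inS (v, v); exact: h.
  have h2 := hrf v; rewrite /rf -/(S v) SA in h2; rewrite SA in h1.
  have := leq_trans hA h2; rewrite leqNgt; move/negP; apply.
  by rewrite ltn_subrL /= (leq_trans h1 (leq_trans h2 (leq_subr 1 kn))).
have ce_load p : (\sum_A \sum_B ce A B p = #|[set x | f x == p]|)%N.
  rewrite /ce.
  under eq_bigr do rewrite exchange_big /=.
  rewrite exchange_big /=.
  under eq_bigr => x _ do under eq_bigr => A _ do rewrite -big_distrr /=
     (sum_pick (S x.2) (fun _ => (f x == p : nat))).
  under eq_bigr => x _ do rewrite (sum_pick (S x.1) (fun _ => (f x == p : nat))).
  rewrite -sum1_card [RHS]big_mkcond /=; apply: eq_bigr => x _.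
  by rewrite inE; case: (f x == p).
exists (fun A => (cnt A)%:R / N%:R), (fun A B p => (ce A B p)%:R / (N * N)%N%:R).
constructor.
- by move=> A; rewrite divr_ge0 ?ler0n.
- by rewrite -mulr_suml -natr_sum cnt_sum divff.
- by move=> A B p; rewrite divr_ge0 ?ler0n.
- move=> A B; rewrite -mulr_suml -natr_sum ce_sum !natrM invfM.
  by rewrite mulrACA.
- by move=> A B p hp; rewrite ce_I // mul0r.
- by move=> A hA; rewrite cnt_k // mul0r.
- move=> p.
  under eq_bigr do rewrite -mulr_suml -natr_sum.
  rewrite -mulr_suml -natr_sum ce_load.
  set M := (\max_(l < n) #|[set x | f x == l]|)%N.
  have hM : (#|[set x | f x == p]|%:R : R) <= M%:R.
    by rewrite ler_nat (leq_bigmax (F := fun l => #|[set x | f x == l]|)).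
  apply: (le_trans (ler_wpM2r _ hM)); first by rewrite invr_ge0 ler0n.
  have -> : M%:R / (N * N)%N%:R = (M%:R / ((N * N)%N%:R / n%:R)) / n%:R :> R.
    by rewrite invf_div mulrA mulrAC mulfK.
  by rewrite ler_wpM2r // invr_ge0 ler0n.
Qed.

Section Analysis.
Local Open Scope classical_set_scope.
Import numFieldNormedType.Exports.

Lemma incr_ge (phi : nat -> nat) : (forall n, phi n < phi n.+1)%N -> forall n, (n <= phi n)%N.
Proof. move=> H; elim=> // n IH; exact: leq_ltn_trans IH (H n). Qed.

Lemma subseq_cvg (R : realType) (u : nat -> R) (l : R) (phi : nat -> nat) :
  (forall n, phi n < phi n.+1)%N -> u @ \oo --> l -> (u \o phi) @ \oo --> l.
Proof.
move=> Hp /cvgrPdist_le H; apply/cvgrPdist_le => e e0.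
have [N _ HN] := H e e0; exists N => // n /= Nn; apply: HN => /=.
exact: leq_trans Nn (incr_ge Hp n).
Qed.

Lemma multi_bw (R : realType) (X : finType) (u : nat -> X -> R) :
  (forall j x, 0 <= u j x <= 1) ->
  exists phi : nat -> nat, (forall n, phi n < phi n.+1)%N /\
    forall x, cvgn (fun j => u (phi j) x).
Proof.
move=> Hb.
suff HH : forall s : seq X, exists phi : nat -> nat, (forall n, phi n < phi n.+1)%N /\
    forall x, x \in s -> cvgn (fun j => u (phi j) x).
  have [phi [H1 H2]] := HH (enum X).
  by exists phi; split => // x; apply: H2; rewrite mem_enum.
- elim=> [|x s [phi [Hp Hc]]].
    by exists id; split.
  have bnd : bounded_fun (fun j => u (phi j) x).
    exists 1; split; first by rewrite realE ler01.
    move=> M M1 j _ /=.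
    have /andP[h0 h1] := Hb (phi j) x.
    by rewrite ger0_norm // (le_trans h1) // ltW.
  have [psi /increasing_seqP Hpsi Hcv] := bolzano_weierstrass bnd.
  exists (phi \o psi); split.
    move=> n /=; have := Hpsi n; rewrite ltEnat /= => h.
    exact: (@homo_ltn nat phi (fun a b => (a < b)%N) (fun y x z => @ltn_trans y x z) Hp).
  move=> y; rewrite inE => /orP[/eqP -> | ys].
    exact: Hcv.
  have := Hc y ys => /cvg_ex [l Hl]; apply/cvg_ex; exists l.
  apply: (subseq_cvg (u := fun j => u (phi j) y)) => //.
Qed.

Lemma cvg_sumX (R : realType) (X : finType) (f : X -> nat -> R) (l : X -> R) :
  (forall x, f x @ \oo --> l x) -> (fun j => \sum_x f x j) @ \oo --> \sum_x l x.
Proof.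
move=> H.
suff HS : forall s : seq X, (fun j => \sum_(x <- s) f x j) @ \oo --> \sum_(x <- s) l x.
  exact: HS.
elim=> [|x s IH].
  under eq_cvg do rewrite big_nil.
  by rewrite big_nil; exact: cvg_cst.
under eq_cvg do rewrite big_cons.
by rewrite big_cons; exact: cvgD (H x) IH.
Qed.

Lemma eq_lim_to (R : realType) (f g : nat -> R) (a b : R) :
  f @ \oo --> a -> g @ \oo --> b -> (forall j, f j = g j) -> a = b.
Proof.
move=> fa gb e; apply/le_anti/andP; split.
  by apply: (ler_cvg_to fa gb); apply: nearW => j; rewrite e.
by apply: (ler_cvg_to gb fa); apply: nearW => j; rewrite e.
Qed.

Lemma AS_bounds (R : realType) n kn (e : R) w y : @AS R n kn e w y ->
  (forall A, 0 <= w A <= 1) /\ (forall A B p, 0 <= y A B p <= 1).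
Proof.
case=> w0 w1 y0 ys yI wk ld.
have wle1 A : w A <= 1 by rewrite -w1 (bigD1 A) //= lerDl sumr_ge0.
split => [A|A B p]; first by rewrite w0 wle1.
rewrite y0 /= (le_trans (y := w A * w B)) //.
  by rewrite -ys (bigD1 p) //= lerDl sumr_ge0.
by rewrite mulr_ile1 ?w0.
Qed.

Lemma limit_AS (R : realType) n kn (hn : (0 < n)%N)
  (wj : nat -> {set 'I_n} -> R)
  (yj : nat -> {set 'I_n} -> {set 'I_n} -> 'I_n -> R) :
  (forall j, @AS R n kn (j.+1%:R^-1) (wj j) (yj j)) ->
  exists w y, @AS R n kn 0 w y.
Proof.
move=> H.
have wb j A : 0 <= wj j A <= 1 by have [h _] := AS_bounds (H j); exact: h.
have yb j A B p : 0 <= yj j A B p <= 1 by have [_ h] := AS_bounds (H j); exact: h.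
have [phi [Hphi Hcw]] := multi_bw wb.
have [psi [Hpsi Hcy]] := multi_bw
  (u := fun j (t : {set 'I_n} * {set 'I_n} * 'I_n) => yj (phi j) t.1.1 t.1.2 t.2)
  (fun j t => yb _ _ _ _).
pose rho j := phi (psi j).
have Hrho j : (rho j < rho j.+1)%N.
  exact: (@homo_ltn nat phi (fun a b => (a < b)%N) (fun y x z => @ltn_trans y x z) Hphi).
have : forall S : {set 'I_n}, exists l : R, (fun j => wj (rho j) S) @ \oo --> l.
  move=> A; have /cvg_ex [l Hl] := Hcw A; exists l.
  exact: (subseq_cvg (u := fun j => wj (phi j) A)).
move=> /choice [wl Hw].
have : forall t : {set 'I_n} * {set 'I_n} * 'I_n,
    exists l : R, (fun j => yj (rho j) t.1.1 t.1.2 t.2) @ \oo --> l.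
  by move=> t; have /cvg_ex [l Hl] := Hcy t; exists l.
move=> /choice [yl' Hy].
exists wl, (fun A B p => yl' (A, B, p)); constructor.
- move=> A; apply: (cvgr_to_ge (Hw A)); apply: nearW => j.
  exact: (as_w0 (H (rho j))).
- apply: (eq_lim_to (cvg_sumX (f := fun A j => wj (rho j) A) Hw) (cvg_cst (1 : R))) => j.
  exact: (as_w1 (H (rho j))).
- move=> A B p; apply: (cvgr_to_ge (Hy (A, B, p))); apply: nearW => j.
  exact: (as_y0 (H (rho j))).
- move=> A B.
  apply: (eq_lim_to (cvg_sumX (f := fun p j => yj (rho j) A B p) (fun p => Hy (A, B, p))) (cvgM (Hw A) (Hw B))) => j.
  exact: (as_ys (H (rho j))).
- move=> A B p hp.
  apply: (eq_lim_to (Hy (A, B, p)) (cvg_cst (0 : R))) => j.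
  exact: (as_yI (H (rho j))).
- move=> A hA.
  apply: (eq_lim_to (Hw A) (cvg_cst (0 : R))) => j.
  exact: (as_wk (H (rho j))).
- move=> p.
  have HL := cvg_sumX (f := fun A j => \sum_B yj (rho j) A B p) (fun A => cvg_sumX (f := fun B j => yj (rho j) A B p) (fun B => Hy (A, B, p))).
  have Hg : (fun j => (1 + harmonic j) / n%:R) @ \oo --> ((1 + 0) / n%:R : R).
    apply: cvgMl; apply: cvgD; [exact: cvg_cst | exact: cvg_harmonic].
  apply: (ler_cvg_to HL Hg); apply: nearW => j /=.
  apply: (le_trans (as_ld (H (rho j)) p)).
  rewrite ler_wpM2r ?invr_ge0 ?ler0n // lerD2l.
  rewrite lef_pV2 ?posrE ?ltr0n // ler_nat ltnS.
  have := incr_ge Hrho j; done.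
Qed.

End Analysis.

Theorem theorem2 (R : realType) (n : nat) (hn : (0 < n)%N) (kn : nat)
  (hk : is_k_of R n kn) :
  exists eps : R, 0 < eps /\
    forall (N : nat), (0 < N)%N ->
      ~ exists f : 'I_N * 'I_N -> 'I_n,
          (forall v : 'I_N, (rf f v <= kn - 1)%N) /\ ib R f <= 1 + eps.
Proof.
have [_ hmin] := hk.
case: (pselect (forall j : nat, exists N (f : 'I_N * 'I_N -> 'I_n), (0 < N)%N /\
  (forall v, (rf f v <= kn - 1)%N) /\ ib R f <= 1 + j.+1%:R^-1)) => [Hall|Hnot].
- exfalso.
  have : forall j, exists wy : ({set 'I_n} -> R) * ({set 'I_n} -> {set 'I_n} -> 'I_n -> R),
      @AS R n kn (j.+1%:R^-1) wy.1 wy.2.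
    move=> j; have [N [f [hN [h1 h2]]]] := Hall j.
    have [w [y H]] := graph_AS hN hn h1 h2.
    by exists (w, y).
  move=> /choice [g Hg].
  have [w [y H]] := limit_AS hn Hg.
  have [c [hc hb]] := exact_bis hn H.
  by have := hmin c hb; rewrite leqNgt hc.
- have /existsNP [j Hj] := Hnot.
  exists j.+1%:R^-1; split; first by rewrite invr_gt0 ltr0n.
  move=> N hN [f [h1 h2]]; apply: Hj; by exists N, f.
Qed.
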